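(* Let $W\ge2$, $B>0$, $\delta>0$ and $1\le k\le L$. Let $F_k,G_k\in\Phi_k(L,W,S,B)$ have weights and biases with $\|\mathcal W_F^{(l)}-\mathcal W_G^{(l)}\|_{\infty,\infty}\le\delta$ and $\|b_F^{(l)}-b_G^{(l)}\|_\infty\le\delta$ for all $1\le l\le k$. Then $$\sup_{x\in\Omega}\|J[F_k](x)-J[G_k](x)\|_\infty\le\delta\,W^{\frac{3^{k-1}-1}{2}}(B\vee d)^{\frac{5\cdot3^{k-1}-1}{2}}\,2^{\frac{3^k-1}{2}-k+1}\,3^{2k-2}.$$ In particular, for $k=L$, $$\sup_{x\in\Omega}\Big|\|\nabla F_L(x)\|-\|\nabla G_L(x)\|\Big|\le\delta\,W^{\frac{3^{L-1}-1}{2}}(B\vee d)^{\frac{5\cdot3^{L-1}-1}{2}}\,2^{\frac{3^L-1}{2}-L+1}\,3^{2L-2}.$$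
   Context: $\Omega=[0,1]^d$, $B\vee d=\max\{B,d\}$. $\eta_3(t)=\max\{t,0\}^3$ applied componentwise. Given weights $\mathcal W^{(1)}\in\mathbb R^{W\times d}$, $\mathcal W^{(l)}\in\mathbb R^{W\times W}$ ($1<l<L$), $\mathcal W^{(L)}\in\mathbb R^{1\times W}$ and biases $b^{(l)}$ of matching sizes, all entries of absolute value at most $B$ and with at most $S$ nonzero entries in total, define $F_1(x)=\mathcal W^{(1)}x+b^{(1)}$ and $F_k(x)=\mathcal W^{(k)}\eta_3(F_{k-1}(x))+b^{(k)}$ for $2\le k\le L$; $\Phi_k(L,W,S,B)$ is the set of all such $F_k$. $J[F_k](x)$ is the Jacobian of $F_k$ at $x$; for a matrix $A$, $\|A\|_\infty$ is the maximum absolute row sum and $\|A\|_{\infty,\infty}$ the maximum absolute entry; $\|\cdot\|_\infty$ on vectors is the maximum absolute entry and $\|\cdot\|$ the Euclidean norm. *)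

(* Defs.v *)
From HB Require Import structures.
From mathcomp Require Import all_boot all_order all_algebra.
From mathcomp Require Import all_classical all_reals all_analysis.
Set Implicit Arguments. Unset Strict Implicit. Unset Printing Implicit Defensive.
Import Order.TTheory GRing.Theory Num.Theory.
Import numFieldNormedType.Exports.
Local Open Scope ring_scope.

Section Net.
Variable R : realType.

Definition eta3 (t : R) : R := (Num.max t 0) ^+ 3.

(* Layers are indexed 0..L-1 here (layer l here = layer l+1 in the paper).
   Input / output dimension of layer l. *)
Definition din (d W l : nat) : nat := if l == 0%N then d else W.
Definition dout (L W l : nat) : nat := if l.+1 == L then 1%N else W.

(* Parameters: w l i j = entry (i,j) of W^(l+1); b l i = entry i of b^(l+1).
   Only indices i < dout l, j < din l are meaningful. *)
Definition weights := nat -> nat -> nat -> R.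
Definition biases := nat -> nat -> R.

(* pre n x = F_{n+1}(x) (components indexed by nat) *)
Fixpoint pre (d W : nat) (w : weights) (b : biases) (n : nat)
    (x : 'rV[R]_d) : nat -> R :=
  match n with
  | 0%N => fun i => \sum_(j < d) w 0%N i j * x 0 j + b 0%N i
  | n'.+1 => fun i =>
      \sum_(j < W) w n i j * eta3 (pre W w b n' x j) + b n i
  end.

(* F_k for k >= 1 *)
Definition Fk (d W : nat) (w : weights) (b : biases) (k : nat)
  (x : 'rV[R]_d) : nat -> R := pre W w b k.-1 x.

(* Membership of the parameters in the class defining Phi(L,W,S,B):
   correct shapes (encoded by dout/din), all entries bounded by B,
   at most S nonzero entries in total. *)
Definition in_Phi (L W S : nat) (B : R) (d : nat) (w : weights) (b : biases)
  : Prop :=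
  (forall l : 'I_L, forall i : 'I_(dout L W l), forall j : 'I_(din d W l),
      `|w l i j| <= B) /\
  (forall l : 'I_L, forall i : 'I_(dout L W l), `|b l i| <= B) /\
  (\sum_(l < L)
      (#|[set p : 'I_(dout L W l) * 'I_(din d W l) | w l p.1 p.2 != 0%R]|
       + #|[set i : 'I_(dout L W l) | b l i != 0%R]|) <= S)%N.

Definition jacobianF (L W d : nat) (w : weights) (b : biases) (k : nat)
  (x : 'rV[R]_d) : 'M[R]_(dout L W k.-1, d) :=
  \matrix_(i, j) 'D_(delta_mx 0 j) (fun y => Fk W w b k y i) x.

Definition mx_inf_norm (m n : nat) (A : 'M[R]_(m, n)) : R :=
  \big[Num.max/0]_(i < m) \sum_(j < n) `|A i j|.

Definition grad_norm (d W : nat) (w : weights) (b : biases) (L : nat)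
  (x : 'rV[R]_d) : R :=
  Num.sqrt (\sum_(j < d) ('D_(delta_mx 0 j) (fun y => Fk W w b L y 0%N) x) ^+ 2).

Definition in_Omega (d : nat) (x : 'rV[R]_d) : Prop :=
  forall j : 'I_d, 0 <= x 0 j <= 1.

End Net.

(* Main.v *)
Require Import Defs.
From HB Require Import structures.
From mathcomp Require Import all_boot all_order all_algebra.
From mathcomp Require Import all_classical all_reals all_analysis.
From mathcomp Require Import ring lra zify.
Import Order.TTheory GRing.Theory Num.Theory.
Import numFieldNormedType.Exports.
Local Open Scope ring_scope.
Local Open Scope classical_set_scope.
Set Implicit Arguments. Unset Strict Implicit. Unset Printing Implicit Defensive.

Section A.
Variable R : realType.

Definition deta3 (t : R) : R := 3 * (Num.max t 0) ^+ 2.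

Lemma eta3_is_derive (t : R) : is_derive t 1 (@eta3 R) (deta3 t).
Proof.
have [t0|t0|->] := ltgtP t 0.
- have -> : deta3 t = 0 by rewrite /deta3 max_r ?ltW // expr0n mulr0.
  apply: (@near_eq_is_derive _ _ _ (cst 0) _ _ _ 0).
  near=> s; rewrite /eta3 max_r ?expr0n//.
  by apply: ltW; near: s; exact: lt_nbhsl.
- apply: (@near_eq_is_derive _ _ _ ((@idfun R) ^+ 3)); last first.
    have := (@is_deriveX _ _ (@idfun R) 3 t 1 1 (is_derive_id _ _)). move=> Hd; apply: (is_derive_eq Hd).
    by rewrite /deta3 max_l ?ltW // [_%:A]mulr1.
  near=> s; rewrite /eta3 max_l // ?ltW//.
  near: s; exact: lt_nbhsr.
- have H : (fun h : R => h^-1 *: ((@eta3 R \o shift 0) (h *: 1) - eta3 0)) @ 0^' --> (0:R).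
    apply: cvg_trans; first apply: (@near_eq_cvg _ _ _ _ (fun h : R => (Num.max h 0)^+2)).
      near=> h; apply: esym.
      have h0 : h != 0 by near: h; exact: nbhs_dnbhs_neq.
      rewrite /= /eta3 addr0 [h%:A]mulr1 maxxx expr0n subr0.
      rewrite -[h^-1 *: _]/(h^-1 * _).
      have [hp|hn] := leP h 0.
        by rewrite !expr0n mulr0.
      by rewrite exprS mulrA mulVf // mul1r.
    have cM : {for 0, continuous ((@idfun R) \max (cst (0:R)))}.
      by apply: continuous_max; [exact: cvg_id| exact: cvg_cst].
    have C : (fun h : R => Num.max h 0 * Num.max h 0) @ (0:R) --> Num.max (0:R) 0 * Num.max 0 0.
      by apply: cvgM; exact: cM.
    rewrite maxxx mulr0 in C.
    have -> : (fun h : R => Num.max h 0 ^+ 2) = (fun h : R => Num.max h 0 * Num.max h 0).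
      by apply: funext => h; rewrite expr2.
    exact: cvg_within_filter.
  apply: DeriveDef; first exact: (cvgP _ H).
  by rewrite /derive (cvg_lim _ H) // /deta3 maxxx expr0n mulr0.
Unshelve. all: by end_near.
Qed.

Lemma is_derive_comp1 (g f : R -> R) (t df dg : R) :
  is_derive t 1 f df -> is_derive (f t) 1 g dg -> is_derive t 1 (g \o f) (dg * df).
Proof.
move=> [Df <-] [Dg <-]; apply: DeriveDef.
  by apply/derivable1_diffP; apply: differentiable_comp; apply/derivable1_diffP.
by rewrite -derive1E derive1_comp // !derive1E.
Qed.

Lemma derive_dir1 (d : nat) (f : 'rV[R]_d -> R) x v :
  'D_v f x = 'D_1 (fun h : R => f (h *: v + x)) 0.
Proof.
rewrite /derive.
have -> : (fun h : R => h^-1 *: ((f \o shift x) (h *: v) - f x)) =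
  (fun h : R => h^-1 *: (((fun h : R => f (h *: v + x)) \o shift 0) (h *: 1) - (fun h : R => f (h *: v + x)) 0)).
  by apply: funext => h /=; rewrite addr0 scale0r add0r [_%:A]mulr1.
by [].
Qed.

Lemma is_derive_sumf (n : nat) (F : 'I_n -> R -> R) (dF : 'I_n -> R) (t : R) :
  (forall j, is_derive t 1 (F j) (dF j)) ->
  is_derive t 1 (fun h => \sum_(j < n) F j h) (\sum_(j < n) dF j).
Proof.
move=> H; have -> : (fun h => \sum_(j < n) F j h) = \sum_(j < n) F j.
  by rewrite fct_sumE.
exact: is_derive_sum.
Qed.

Lemma is_derive_addc (f : R -> R) (c t df : R) :
  is_derive t 1 f df -> is_derive t 1 (fun h => f h + c) df.
Proof.
move=> H; have := is_deriveD H (is_derive_cst c t 1).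
by rewrite addr0.
Qed.

Lemma is_derive_mulc (f : R -> R) (c t df : R) :
  is_derive t 1 f df -> is_derive t 1 (fun h => c * f h) (c * df).
Proof. by move=> H; have := is_deriveZ c H. Qed.

Lemma is_derive_affine (a c t : R) : is_derive t 1 (fun h : R => h * a + c) a.
Proof.
apply: is_derive_addc.
have := is_deriveZ a (is_derive_id t (1:R)).
rewrite [a *: 1]mulr1 => H.
have -> : (fun h : R => h * a) = a \*: idfun by apply: funext => h /=; rewrite mulrC.
exact: H.
Qed.

Section Net.
Variables (d W : nat) (w : weights R) (b : biases R) (x v : 'rV[R]_d).

Fixpoint dpre (n : nat) : nat -> R :=
  match n with
  | 0%N => fun i => \sum_(j < d) w 0%N i j * v 0 j
  | n'.+1 => fun i => \sum_(j < W) w n i j * (deta3 (pre W w b n' x j) * dpre n' j)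
  end.

Lemma pre_is_derive n i :
  is_derive (0:R) 1 (fun h : R => pre W w b n (h *: v + x) i) (dpre n i).
Proof.
elim: n i => [|n IH] i /=.
  apply: is_derive_addc; apply: is_derive_sumf => j.
  have -> : (fun h : R => w 0%N i j * (h *: v + x) 0 j) =
     (fun h : R => h * (w 0%N i j * v 0 j) + w 0%N i j * x 0 j).
    apply: funext => h; rewrite !mxE; ring.
  exact: is_derive_affine.
apply: is_derive_addc; apply: is_derive_sumf => j.
apply: is_derive_mulc.
have := is_derive_comp1 (IH j) (eta3_is_derive _).
by rewrite scale0r add0r.
Qed.

End Net.

Lemma D_Fk (d W k : nat) (w : weights R) (b : biases R) (x v : 'rV[R]_d) i :
  'D_v (fun y => Fk W w b k y i) x = dpre W w b x v k.-1 i.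
Proof.
by rewrite derive_dir1 /Fk; have [_ ->] := pre_is_derive W w b x v k.-1 i.
Qed.
Local Close Scope classical_set_scope.
Lemma pmax_lip (s t : R) : `|Num.max s 0 - Num.max t 0| <= `|s - t|.
Proof.
have h1 := ler_norm (s - t); have h2 := ler_norm (t - s).
rewrite distrC in h2; rewrite ler_norml.
by case: (leP s 0) => hs; case: (leP t 0) => ht; apply/andP; split; lra.
Qed.

Lemma pmax_bnd (s M : R) : `|s| <= M -> 0 <= Num.max s 0 <= M.
Proof.
move=> hM; have h1 := ler_norm s; have h0 := normr_ge0 s.
by case: (leP s 0) => hs; apply/andP; split; lra.
Qed.

Lemma eta3_bound (s M : R) : `|s| <= M -> `|eta3 s| <= M ^+ 3.
Proof.
move=> /pmax_bnd /andP[h0 h1]; rewrite /eta3 ger0_norm ?exprn_ge0 //.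
by apply: lerXn2r; rewrite // nnegrE; lra.
Qed.

Lemma eta3_lip (s t M : R) : `|s| <= M -> `|t| <= M ->
  `|eta3 s - eta3 t| <= 3 * M ^+ 2 * `|s - t|.
Proof.
move=> /pmax_bnd /andP[hs0 hs1] /pmax_bnd /andP[ht0 ht1].
have hl := pmax_lip s t.
set ps := Num.max s 0 in hs0 hs1 hl *; set pt := Num.max t 0 in ht0 ht1 hl *.
have -> : eta3 s - eta3 t = (ps - pt) * (ps ^+ 2 + ps * pt + pt ^+ 2).
  rewrite /eta3 -/ps -/pt; ring.
rewrite normrM mulrC (ger0_norm (_ : 0 <= _)); last first.
  by apply: addr_ge0; [apply: addr_ge0|]; [apply: exprn_ge0| apply: mulr_ge0|apply: exprn_ge0].
apply: ler_pM => //.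
- by apply: addr_ge0; [apply: addr_ge0|]; [apply: exprn_ge0| apply: mulr_ge0|apply: exprn_ge0].
- nra.
Qed.

Lemma deta3_bound (s M : R) : `|s| <= M -> 0 <= deta3 s <= 3 * M ^+ 2.
Proof.
move=> /pmax_bnd /andP[h0 h1]; rewrite /deta3; apply/andP; split.
  by apply: mulr_ge0 => //; apply: exprn_ge0.
rewrite ler_pM2l //; apply: lerXn2r; rewrite // nnegrE; lra.
Qed.

Lemma deta3_lip (s t M : R) : `|s| <= M -> `|t| <= M ->
  `|deta3 s - deta3 t| <= 6 * M * `|s - t|.
Proof.
move=> /pmax_bnd /andP[hs0 hs1] /pmax_bnd /andP[ht0 ht1].
have hl := pmax_lip s t.
set ps := Num.max s 0 in hs0 hs1 hl *; set pt := Num.max t 0 in ht0 ht1 hl *.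
have -> : deta3 s - deta3 t = (ps - pt) * (3 * (ps + pt)).
  rewrite /deta3 -/ps -/pt; ring.
rewrite normrM mulrC (ger0_norm (_ : 0 <= 3 * (ps + pt))); last lra.
apply: ler_pM => //; lra.
Qed.


Lemma sum_le_const (n : nat) (F : 'I_n -> R) (c : R) :
  (forall j, F j <= c) -> \sum_(j < n) F j <= n%:R * c.
Proof.
move=> H; apply: le_trans (ler_sum _ (fun j _ => H j)) _.
by rewrite sumr_const card_ord mulr_natl.
Qed.

Lemma sum_norm_le (n : nat) (F : 'I_n -> R) (c : R) :
  (forall j, `|F j| <= c) -> `|\sum_(j < n) F j| <= n%:R * c.
Proof. by move=> H; apply: le_trans (ler_norm_sum _ _ _) (sum_le_const H). Qed.

Lemma rowsum2 (n m : nat) (al be : 'I_n -> R) (X Y : 'I_n -> 'I_m -> R) :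
  \sum_(j < m) `|\sum_(l < n) (al l * X l j + be l * Y l j)| <=
  \sum_(l < n) (`|al l| * \sum_(j < m) `|X l j| + `|be l| * \sum_(j < m) `|Y l j|).
Proof.
apply: le_trans (_ : \sum_(j < m) \sum_(l < n) (`|al l| * `|X l j| + `|be l| * `|Y l j|) <= _).
  apply: ler_sum => j _; apply: le_trans (ler_norm_sum _ _ _) _.
  apply: ler_sum => l _; apply: le_trans (ler_normD _ _) _.
  by rewrite !normrM.
rewrite exchange_big /=; apply: ler_sum => l _.
by rewrite big_split /= !mulr_sumr.
Qed.

Lemma rowsum2' (n m : nat) (F : 'I_n -> 'I_m -> R) (al be : 'I_n -> R) (X Y : 'I_n -> 'I_m -> R) :
  (forall l j, F l j = al l * X l j + be l * Y l j) ->
  \sum_(j < m) `|\sum_(l < n) F l j| <=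
  \sum_(l < n) (`|al l| * \sum_(j < m) `|X l j| + `|be l| * \sum_(j < m) `|Y l j|).
Proof.
move=> H; apply: le_trans (rowsum2 al be X Y).
by apply: ler_sum => j _; under eq_bigr do rewrite H.
Qed.

Lemma dpre0_delta (d W : nat) (w : weights R) (b : biases R) (x : 'rV[R]_d) i (j : 'I_d) :
  dpre W w b x (delta_mx 0 j) 0 i = w 0%N i j.
Proof.
rewrite /= (bigD1 j) //= mxE !eqxx mulr1 big1 ?addr0 // => l hl.
by rewrite mxE eqxx /= (negbTE hl) mulr0.
Qed.


Fixpoint Mb (Wr a : R) (n : nat) : R :=
  if n is n'.+1 then 2 * Wr * a * Mb Wr a n' ^+ 3 else 2 * a ^+ 2.
Fixpoint pp (n : nat) : R := if n is n'.+1 then 3 / 2 * pp n' else 1 / 2.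
Fixpoint qq (n : nat) : R := if n is n'.+1 then 2 * qq n' + 1 else 1.
Fixpoint rr (n : nat) : R := if n is n'.+1 then 9 / 2 * rr n' else 1.

Lemma pp_ge0 n : 0 <= pp n.
Proof. elim: n => [|n IH] /=; lra. Qed.
Lemma qq_ge1 n : 1 <= qq n.
Proof. elim: n => [|n IH] /=; lra. Qed.
Lemma rr_ge0 n : 0 <= rr n.
Proof. elim: n => [|n IH] /=; lra. Qed.
Lemma pqr n : pp n * (1 + 2 * qq n) <= 2 * rr n.
Proof.
elim: n => [|n IH] /=; first lra.
have := pp_ge0 n; have := qq_ge1 n; nra.
Qed.

Lemma Mb_ge2 (Wr a : R) n : 1 <= Wr -> 1 <= a -> 2 <= Mb Wr a n.
Proof.
move=> W1 a1; elim: n => [|n IH] /=; first nra.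
have h : 8 <= Mb Wr a n ^+ 3.
  have -> : (8 : R) = 2 ^+ 3 by rewrite !exprS expr0; lra.
  by apply: lerXn2r; rewrite // nnegrE; lra.
set z := Mb Wr a n ^+ 3 in h *.
have h1 : 1 <= Wr * a by nra.
nra.
Qed.


Section Layer.
Variables (L W d k : nat) (B delta : R) (x : 'rV[R]_d).
Hypotheses (HW : (2 <= W)%N) (HB : 0 < B) (Hdel : 0 < delta) (Hd1 : (1 <= d)%N)
  (Hx : forall j : 'I_d, `|x 0 j| <= 1).
Local Notation a := (Num.max B d%:R).
Local Notation Wr := (W%:R : R).
Local Notation M n := (Mb Wr a n).

Definition bnd (w : weights R) (b : biases R) :=
  (forall l i j, (l < L)%N -> (i < dout L W l)%N -> (j < din d W l)%N -> `|w l i j| <= B) /\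
  (forall l i, (l < L)%N -> (i < dout L W l)%N -> `|b l i| <= B).

Lemma a1 : 1 <= a.
Proof. by rewrite le_max; apply/orP; right; rewrite ler1n. Qed.
Lemma Ba : B <= a.
Proof. by rewrite le_max lexx. Qed.
Lemma da : d%:R <= a.
Proof. by rewrite le_max lexx orbT. Qed.
Lemma W2 : 2 <= Wr.
Proof. by rewrite ler_nat. Qed.
Lemma M2 n : 2 <= M n.
Proof. by apply: Mb_ge2; [have := W2; lra| exact: a1]. Qed.

Lemma val0 w b i : bnd w b -> (0 < L)%N -> (i < dout L W 0)%N ->
  `|pre W w b 0 x i| <= M 0.
Proof.
move=> [hw hb] L0 hi /=.
apply: le_trans (ler_normD _ _) _.
have h1 : `|\sum_(j < d) w 0%N i j * x 0 j| <= d%:R * B.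
  apply: sum_norm_le => j; rewrite normrM -[B]mulr1.
  apply: ler_pM => //; first exact: (hw 0%N i j L0 hi (ltn_ord j)).
have h2 := hb 0%N i L0 hi.
have h3 : d%:R * B <= a * a by apply: ler_pM; [exact: ler0n|exact: ltW|exact: da|exact: Ba].
have := a1; have := Ba; rewrite expr2; nra.
Qed.

Lemma jac0 w b i : bnd w b -> (0 < L)%N -> (i < dout L W 0)%N ->
  \sum_(j < d) `|dpre W w b x (delta_mx 0 j) 0 i| <= pp 0 * M 0.
Proof.
move=> [hw hb] L0 hi.
under eq_bigr do rewrite dpre0_delta.
have h1 : \sum_(j < d) `|w 0%N i j| <= d%:R * B.
  by apply: sum_le_const => j; exact: (hw 0%N i j L0 hi (ltn_ord j)).
have h3 : d%:R * B <= a * a by apply: ler_pM; [exact: ler0n|exact: ltW|exact: da|exact: Ba].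
rewrite /= expr2; lra.
Qed.

Lemma valS w b n i : bnd w b -> (n.+1 < L)%N -> (i < dout L W n.+1)%N ->
  (forall l, (l < W)%N -> `|pre W w b n x l| <= M n) ->
  `|pre W w b n.+1 x i| <= M n.+1.
Proof.
move=> [hw hb] hL hi IH /=.
apply: le_trans (ler_normD _ _) _.
have h1 : `|\sum_(l < W) w n.+1 i l * eta3 (pre W w b n x l)| <= Wr * (B * M n ^+ 3).
  apply: sum_norm_le => l; rewrite normrM.
  apply: ler_pM => //; first exact: (hw n.+1 i l hL hi (ltn_ord l)).
  exact: eta3_bound (IH l (ltn_ord l)).
have h2 := hb n.+1 i hL hi.
have h3 : 8 <= M n ^+ 3.
  have -> : (8 : R) = 2 ^+ 3 by rewrite !exprS expr0; lra.
  by apply: lerXn2r; rewrite ?nnegrE; have := M2 n; lra.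
set z := M n ^+ 3 in h1 h3 *.
have := a1; have := Ba; have := W2 => *.
have : B * z <= a * z by nra.
have : 1 <= Wr * z by nra.
nra.
Qed.


Lemma preS w b n i : pre W w b n.+1 x i =
  \sum_(l < W) w n.+1 i l * eta3 (pre W w b n x l) + b n.+1 i.
Proof. by []. Qed.
Lemma dpreS w b v n i : dpre W w b x v n.+1 i =
  \sum_(l < W) w n.+1 i l * (deta3 (pre W w b n x l) * dpre W w b x v n l).
Proof. by []. Qed.

Lemma M3 n : 8 <= M n ^+ 3.
Proof.
have -> : (8 : R) = 2 ^+ 3 by rewrite !exprS expr0; lra.
by apply: lerXn2r; rewrite ?nnegrE; have := M2 n; lra.
Qed.

Lemma jacS w b n i : bnd w b -> (n.+1 < L)%N -> (i < dout L W n.+1)%N ->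
  (forall l, (l < W)%N -> `|pre W w b n x l| <= M n) ->
  (forall l, (l < W)%N -> \sum_(j < d) `|dpre W w b x (delta_mx 0 j) n l| <= pp n * M n) ->
  \sum_(j < d) `|dpre W w b x (delta_mx 0 j) n.+1 i| <= pp n.+1 * M n.+1.
Proof.
move=> [hw hb] hL hi IHv IHj.
under eq_bigr do rewrite dpreS.
apply: le_trans (rowsum2' (al := fun l : 'I_W => w n.+1 i l * deta3 (pre W w b n x l))
   (be := fun _ => 0) (X := fun l j => dpre W w b x (delta_mx 0 j) n l) (Y := fun _ _ => 0) _) _.
  by move=> l j; rewrite mul0r addr0 mulrA.
apply: le_trans (_ : _ <= Wr * (B * (3 * M n ^+ 2) * (pp n * M n))) _.
  apply: sum_le_const => l; rewrite normr0 mul0r addr0.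
  have [d0 d1] := andP (deta3_bound (IHv l (ltn_ord l))).
  apply: ler_pM => //.
  - by apply: sumr_ge0 => j _.
  - rewrite normrM (ger0_norm d0); apply: ler_pM => //.
    exact: (hw n.+1 i l hL hi (ltn_ord l)).
  - exact: IHj l (ltn_ord l).
rewrite /= exprSr.
have hp := pp_ge0 n; have hM := M2 n; have hB := Ba; have hW := W2.
set m := M n in hM *.
have : 0 <= 3 * Wr * m ^+ 2 * pp n * m.
  by apply: mulr_ge0; [apply: mulr_ge0; [apply: mulr_ge0; [apply: mulr_ge0|apply: exprn_ge0]|]|]; lra.
nra.
Qed.


Section Diff.
Variables (wF wG : weights R) (bF bG : biases R).
Hypotheses (hF : bnd wF bF) (hG : bnd wG bG) (Hk : (k <= L)%N)
  (wD : forall l i j, (l < k)%N -> (i < dout L W l)%N -> (j < din d W l)%N ->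
      `|wF l i j - wG l i j| <= delta)
  (bD : forall l i, (l < k)%N -> (i < dout L W l)%N -> `|bF l i - bG l i| <= delta).

Lemma diff0 i : (0 < k)%N -> (i < dout L W 0)%N ->
  `|pre W wF bF 0 x i - pre W wG bG 0 x i| * a <= delta * qq 0 * M 0.
Proof.
move=> k0 hi.
have -> : pre W wF bF 0 x i - pre W wG bG 0 x i =
    \sum_(j < d) (wF 0%N i j - wG 0%N i j) * x 0 j + (bF 0%N i - bG 0%N i).
  have -> : \sum_(j < d) (wF 0%N i j - wG 0%N i j) * x 0 j =
     \sum_(j < d) wF 0%N i j * x 0 j - \sum_(j < d) wG 0%N i j * x 0 j.
    by rewrite -sumrB; apply: eq_bigr => j _; ring.
  rewrite /=; ring.
have h1 : `|\sum_(j < d) (wF 0%N i j - wG 0%N i j) * x 0 j| <= d%:R * delta.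
  apply: sum_norm_le => j; rewrite normrM -[delta]mulr1.
  apply: ler_pM => //; first exact: (wD k0 hi (ltn_ord j)).
have h2 := bD k0 hi.
have h3 := ler_normD (\sum_(j < d) (wF 0%N i j - wG 0%N i j) * x 0 j) (bF 0%N i - bG 0%N i).
have ha := a1; have hd := da.
set e := `|_ + _| in h3 *.
have he : e <= delta * (d%:R + 1) by lra.
apply: le_trans (_ : e * a <= delta * (d%:R + 1) * a) _.
  by apply: ler_wpM2r => //; lra.
rewrite /=.
have : 0 <= delta * a by apply: mulr_ge0; [exact: ltW| lra].
nra.
Qed.

Lemma jdiff0 i : (0 < k)%N -> (i < dout L W 0)%N ->
  \sum_(j < d) `|dpre W wF bF x (delta_mx 0 j) 0 i - dpre W wG bG x (delta_mx 0 j) 0 i|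
    <= delta * rr 0 * M 0.
Proof.
move=> k0 hi.
under eq_bigr do rewrite !dpre0_delta.
have h1 : \sum_(j < d) `|wF 0%N i j - wG 0%N i j| <= d%:R * delta.
  by apply: sum_le_const => j; exact: (wD k0 hi (ltn_ord j)).
have ha := a1; have hd := da.
rewrite /=.
have h2 : d%:R <= 2 * a ^+ 2 by rewrite expr2; nra.
have : d%:R * delta <= 2 * a ^+ 2 * delta by apply: ler_wpM2r => //; exact: ltW.
lra.
Qed.


Lemma hBe (e : R) (n : nat) : 0 <= e -> e * a <= delta * qq n * M n -> B * e <= delta * qq n * M n.
Proof.
move=> e0 h; apply: le_trans h; rewrite mulrC; apply: ler_wpM2l => //; exact: Ba.
Qed.

Lemma diffS n i : (n.+1 < k)%N -> (i < dout L W n.+1)%N ->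
  (forall l, (l < W)%N -> `|pre W wF bF n x l| <= M n) ->
  (forall l, (l < W)%N -> `|pre W wG bG n x l| <= M n) ->
  (forall l, (l < W)%N -> `|pre W wF bF n x l - pre W wG bG n x l| * a <= delta * qq n * M n) ->
  `|pre W wF bF n.+1 x i - pre W wG bG n.+1 x i| * a <= delta * qq n.+1 * M n.+1.
Proof.
move=> hk hi IF IG IE.
have hL : (n.+1 < L)%N by apply: leq_trans Hk.
have [hwF hbF] := hF; have [hwG hbG] := hG.
rewrite !preS.
have -> : \sum_(l < W) wF n.+1 i l * eta3 (pre W wF bF n x l) + bF n.+1 i -
    (\sum_(l < W) wG n.+1 i l * eta3 (pre W wG bG n x l) + bG n.+1 i) =
    \sum_(l < W) ((wF n.+1 i l - wG n.+1 i l) * eta3 (pre W wF bF n x l) +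
       wG n.+1 i l * (eta3 (pre W wF bF n x l) - eta3 (pre W wG bG n x l))) +
    (bF n.+1 i - bG n.+1 i).
  have -> : \sum_(l < W) ((wF n.+1 i l - wG n.+1 i l) * eta3 (pre W wF bF n x l) +
       wG n.+1 i l * (eta3 (pre W wF bF n x l) - eta3 (pre W wG bG n x l))) =
     \sum_(l < W) wF n.+1 i l * eta3 (pre W wF bF n x l) -
     \sum_(l < W) wG n.+1 i l * eta3 (pre W wG bG n x l).
    by rewrite -sumrB; apply: eq_bigr => l _; ring.
  ring.
have h1 : `|\sum_(l < W) ((wF n.+1 i l - wG n.+1 i l) * eta3 (pre W wF bF n x l) +
       wG n.+1 i l * (eta3 (pre W wF bF n x l) - eta3 (pre W wG bG n x l)))|
     <= Wr * (delta * M n ^+ 3 + 3 * M n ^+ 2 * (delta * qq n * M n)).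
  apply: sum_norm_le => l; apply: le_trans (ler_normD _ _) _.
  have lW := ltn_ord l.
  apply: lerD.
    rewrite normrM; apply: ler_pM => //.
      exact: (wD hk hi lW).
    exact: eta3_bound (IF l lW).
  rewrite normrM.
  apply: le_trans (_ : `|wG n.+1 i l| * (3 * M n ^+ 2 * `|pre W wF bF n x l - pre W wG bG n x l|) <= _).
    by apply: ler_wpM2l => //; exact: eta3_lip (IF l lW) (IG l lW).
  rewrite mulrCA; apply: ler_wpM2l.
    by apply: mulr_ge0; rewrite ?sqr_ge0.
  apply: le_trans (_ : B * `|pre W wF bF n x l - pre W wG bG n x l| <= _).
    by apply: ler_wpM2r => //; exact: (hwG n.+1 i l hL hi lW).
  exact: hBe (IE l lW).
have h2 := bD hk hi.
have h3 := ler_normD (\sum_(l < W) ((wF n.+1 i l - wG n.+1 i l) * eta3 (pre W wF bF n x l) +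
       wG n.+1 i l * (eta3 (pre W wF bF n x l) - eta3 (pre W wG bG n x l)))) (bF n.+1 i - bG n.+1 i).
set e := `|_ + _| in h3 *.
have ha := a1.
apply: le_trans (_ : e * a <= (Wr * (delta * M n ^+ 3 + 3 * M n ^+ 2 * (delta * qq n * M n)) + delta) * a) _.
  by apply: ler_wpM2r; [lra|lra].
have -> : (Wr * (delta * M n ^+ 3 + 3 * M n ^+ 2 * (delta * qq n * M n)) + delta) * a =
    (delta * a) * (Wr * M n ^+ 3 * (1 + 3 * qq n) + 1) by ring.
have -> : delta * qq n.+1 * M n.+1 = (delta * a) * (Wr * M n ^+ 3 * (4 * qq n + 2)).
  by rewrite /=; ring.
apply: ler_wpM2l; first by apply: mulr_ge0; [exact: ltW|lra].
have := M3 n; have := W2; have := qq_ge1 n.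
set z := M n ^+ 3 => hq hW hz.
have : 1 <= Wr * z by nra.
nra.
Qed.


Lemma jdiffS n i : (n.+1 < k)%N -> (i < dout L W n.+1)%N ->
  (forall l, (l < W)%N -> `|pre W wF bF n x l| <= M n) ->
  (forall l, (l < W)%N -> `|pre W wG bG n x l| <= M n) ->
  (forall l, (l < W)%N -> \sum_(j < d) `|dpre W wF bF x (delta_mx 0 j) n l| <= pp n * M n) ->
  (forall l, (l < W)%N -> `|pre W wF bF n x l - pre W wG bG n x l| * a <= delta * qq n * M n) ->
  (forall l, (l < W)%N -> \sum_(j < d) `|dpre W wF bF x (delta_mx 0 j) n l -
       dpre W wG bG x (delta_mx 0 j) n l| <= delta * rr n * M n) ->
  \sum_(j < d) `|dpre W wF bF x (delta_mx 0 j) n.+1 i - dpre W wG bG x (delta_mx 0 j) n.+1 i|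
    <= delta * rr n.+1 * M n.+1.
Proof.
move=> hk hi IF IG IJ IE ID.
have hL : (n.+1 < L)%N by apply: leq_trans Hk.
have [hwF hbF] := hF; have [hwG hbG] := hG.
under eq_bigr do rewrite !dpreS -sumrB.
apply: le_trans (rowsum2'
   (al := fun l : 'I_W => wF n.+1 i l * deta3 (pre W wF bF n x l) - wG n.+1 i l * deta3 (pre W wG bG n x l))
   (be := fun l : 'I_W => wG n.+1 i l * deta3 (pre W wG bG n x l))
   (X := fun l j => dpre W wF bF x (delta_mx 0 j) n l)
   (Y := fun l j => dpre W wF bF x (delta_mx 0 j) n l - dpre W wG bG x (delta_mx 0 j) n l) _) _.
  by move=> l j; ring.
apply: le_trans (_ : _ <= Wr * ((delta * (3 * M n ^+ 2) + 6 * M n * (delta * qq n * M n)) * (pp n * M n)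
     + B * (3 * M n ^+ 2) * (delta * rr n * M n))) _.
  apply: sum_le_const => l /=.
  have lW := ltn_ord l.
  have [dF0 dF1] := andP (deta3_bound (IF l lW)).
  have [dG0 dG1] := andP (deta3_bound (IG l lW)).
  apply: lerD; apply: ler_pM => //.
  - by apply: sumr_ge0.
  - have -> : wF n.+1 i l * deta3 (pre W wF bF n x l) - wG n.+1 i l * deta3 (pre W wG bG n x l) =
       (wF n.+1 i l - wG n.+1 i l) * deta3 (pre W wF bF n x l) +
       wG n.+1 i l * (deta3 (pre W wF bF n x l) - deta3 (pre W wG bG n x l)) by ring.
    apply: le_trans (ler_normD _ _) _; apply: lerD.
      rewrite normrM (ger0_norm dF0); apply: ler_pM => //.
      exact: (wD hk hi lW).
    rewrite normrM.
    apply: le_trans (_ : `|wG n.+1 i l| * (6 * M n * `|pre W wF bF n x l - pre W wG bG n x l|) <= _).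
      by apply: ler_wpM2l => //; exact: deta3_lip (IF l lW) (IG l lW).
    rewrite mulrCA; apply: ler_wpM2l.
      by apply: mulr_ge0 => //; have := M2 n; lra.
    apply: le_trans (_ : B * `|pre W wF bF n x l - pre W wG bG n x l| <= _).
      by apply: ler_wpM2r => //; exact: (hwG n.+1 i l hL hi lW).
    exact: hBe (IE l lW).
  - exact: IJ l lW.
  - by apply: sumr_ge0.
  - rewrite normrM (ger0_norm dG0); apply: ler_pM => //.
    exact: (hwG n.+1 i l hL hi lW).
  - exact: ID l lW.
have -> : Wr * ((delta * (3 * M n ^+ 2) + 6 * M n * (delta * qq n * M n)) * (pp n * M n)
     + B * (3 * M n ^+ 2) * (delta * rr n * M n)) =
   (delta * Wr * M n ^+ 3) * (3 * (pp n * (1 + 2 * qq n)) + 3 * B * rr n) by ring.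
have -> : delta * rr n.+1 * M n.+1 = (delta * Wr * M n ^+ 3) * (9 * a * rr n).
  by rewrite /=; field.
apply: ler_wpM2l.
  apply: mulr_ge0; last by have := M3 n; lra.
  by apply: mulr_ge0; [exact: ltW| have := W2; lra].
have := pqr n; have := rr_ge0 n; have := Ba; have := a1 => *.
nra.
Qed.


Lemma inv n : (n < k)%N -> forall i, (i < dout L W n)%N ->
  [/\ `|pre W wF bF n x i| <= M n, `|pre W wG bG n x i| <= M n,
      \sum_(j < d) `|dpre W wF bF x (delta_mx 0 j) n i| <= pp n * M n,
      `|pre W wF bF n x i - pre W wG bG n x i| * a <= delta * qq n * M n &
      \sum_(j < d) `|dpre W wF bF x (delta_mx 0 j) n i - dpre W wG bG x (delta_mx 0 j) n i|
         <= delta * rr n * M n].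
Proof.
elim: n => [|n IH] hn i hi.
  have L0 : (0 < L)%N by apply: leq_trans Hk.
  split; [exact: val0 hF L0 hi|exact: val0 hG L0 hi|exact: jac0 hF L0 hi|
          exact: diff0 hn hi|exact: jdiff0 hn hi].
have hn' : (n < k)%N by apply: ltnW.
have hL : (n.+1 < L)%N by apply: leq_trans Hk.
have hd : forall l, (l < W)%N -> (l < dout L W n)%N.
  by move=> l hl; rewrite /dout (ltn_eqF hL).
have IF : forall l, (l < W)%N -> `|pre W wF bF n x l| <= M n.
  by move=> l hl; case: (IH hn' l (hd l hl)).
have IG : forall l, (l < W)%N -> `|pre W wG bG n x l| <= M n.
  by move=> l hl; case: (IH hn' l (hd l hl)).
have IJ : forall l, (l < W)%N -> \sum_(j < d) `|dpre W wF bF x (delta_mx 0 j) n l| <= pp n * M n.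
  by move=> l hl; case: (IH hn' l (hd l hl)).
have IE : forall l, (l < W)%N -> `|pre W wF bF n x l - pre W wG bG n x l| * a <= delta * qq n * M n.
  by move=> l hl; case: (IH hn' l (hd l hl)).
have ID : forall l, (l < W)%N -> \sum_(j < d) `|dpre W wF bF x (delta_mx 0 j) n l -
       dpre W wG bG x (delta_mx 0 j) n l| <= delta * rr n * M n.
  by move=> l hl; case: (IH hn' l (hd l hl)).
split; [exact: valS hF hL hi IF|exact: valS hG hL hi IG|exact: jacS hF hL hi IF IJ|
        exact: diffS hn hi IF IG IE|exact: jdiffS hn hi IF IG IJ IE ID].
Qed.

End Diff.
End Layer.

Fixpoint alpha n := if n is n'.+1 then (alpha n' * 3).+1 else 0%N.
Fixpoint beta n := if n is n'.+1 then (beta n' * 3).+1 else 2%N.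
Fixpoint gam n := if n is n'.+1 then (gam n' * 3).+1 else 1%N.

Lemma alphaE n : (3 ^ n = 2 * alpha n + 1)%N.
Proof. elim: n => [|n IH] //=; rewrite expnS IH; lia. Qed.
Lemma betaE n : (5 * 3 ^ n = 2 * beta n + 1)%N.
Proof. elim: n => [|n IH] //=; rewrite expnS mulnCA IH; lia. Qed.
Lemma gamE n : (3 ^ n.+1 = 2 * gam n + 1)%N.
Proof. elim: n => [|n IH] //=; rewrite expnS IH; lia. Qed.
Lemma gam_ge n : (n <= gam n)%N.
Proof. elim: n => [|n IH] //=; lia. Qed.

Lemma Mb_closed (Wr a : R) n : Mb Wr a n = Wr ^+ alpha n * a ^+ beta n * 2 ^+ gam n.
Proof.
elim: n => [|n IH] /=; first by rewrite expr0 expr1; ring.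
by rewrite IH !exprS !exprM; ring.
Qed.

Lemma rr_closed n : rr n = (9 / 2) ^+ n.
Proof. by elim: n => [|n IH] //=; rewrite IH exprS. Qed.

Lemma bound_eq (Wr a delta : R) n :
  delta * Wr ^+ ((3 ^ n - 1) %/ 2)%N * a ^+ ((5 * 3 ^ n - 1) %/ 2)%N
   * 2 ^+ ((3 ^ n.+1 - 1) %/ 2 + 1 - n.+1)%N * 3 ^+ (2 * n.+1 - 2)%N
  = delta * rr n * Mb Wr a n.
Proof.
have e1 : ((3 ^ n - 1) %/ 2)%N = alpha n by rewrite alphaE addnK mulKn.
have e2 : ((5 * 3 ^ n - 1) %/ 2)%N = beta n by rewrite betaE addnK mulKn.
have e3 : ((3 ^ n.+1 - 1) %/ 2 + 1 - n.+1)%N = (gam n - n)%N.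
  rewrite gamE addnK mulKn //; lia.
have e4 : (2 * n.+1 - 2)%N = (2 * n)%N by lia.
rewrite e1 e2 e3 e4 Mb_closed rr_closed.
have -> : (2 : R) ^+ gam n = 2 ^+ (gam n - n) * 2 ^+ n by rewrite -exprD subnK // gam_ge.
have -> : (3 : R) ^+ (2 * n) = (9 / 2) ^+ n * 2 ^+ n.
  by rewrite exprM -exprMn; congr (_ ^+ _); field.
ring.
Qed.


Lemma le_sum_term (m : nat) (F : 'I_m -> R) (j : 'I_m) :
  (forall i, 0 <= F i) -> F j <= \sum_(i < m) F i.
Proof.
move=> H; rewrite (bigD1 j) //= lerDl; exact: sumr_ge0.
Qed.

Lemma sqrt_one_side (m : nat) (f g : 'I_m -> R) :
  Num.sqrt (\sum_(j < m) f j ^+ 2) <=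
  Num.sqrt (\sum_(j < m) g j ^+ 2) + \sum_(j < m) `|f j - g j|.
Proof.
set s := Num.sqrt (\sum_(j < m) g j ^+ 2); set S := \sum_(j < m) `|f j - g j|.
have s0 : 0 <= s by exact: sqrtr_ge0.
have S0 : 0 <= S by apply: sumr_ge0.
have gs : forall j, `|g j| <= s.
  move=> j; rewrite -sqrtr_sqr; apply: ler_wsqrtr.
  by apply: (le_sum_term (F := fun i => g i ^+ 2)) => i; exact: sqr_ge0.
have eS : forall j, `|f j - g j| <= S.
  by move=> j; apply: (le_sum_term (F := fun i => `|f i - g i|)).
rewrite -(ger0_norm (addr_ge0 s0 S0)) -sqrtr_sqr ler_sqrt ?sqr_ge0 //.
apply: le_trans (_ : \sum_(j < m) (g j ^+ 2 + 2 * (s * `|f j - g j|) + S * `|f j - g j|) <= _).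
  apply: ler_sum => j _.
  have h1 := gs j; have h2 := eS j.
  have h3 : g j * (f j - g j) <= `|g j| * `|f j - g j|.
    by rewrite -normrM; exact: ler_norm.
  have h4 : (f j - g j) ^+ 2 = `|f j - g j| * `|f j - g j|.
    by rewrite -expr2 real_normK // num_real.
  have h5 : `|g j| * `|f j - g j| <= s * `|f j - g j| by apply: ler_wpM2r.
  have h6 : `|f j - g j| * `|f j - g j| <= S * `|f j - g j| by apply: ler_wpM2r.
  have -> : f j ^+ 2 = g j ^+ 2 + 2 * (g j * (f j - g j)) + (f j - g j) ^+ 2 by ring.
  lra.
rewrite !big_split /= -!mulr_sumr.
have -> : \sum_(j < m) g j ^+ 2 = s ^+ 2.
  by rewrite sqr_sqrtr //; apply: sumr_ge0 => j _; exact: sqr_ge0.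
rewrite -/S; nra.
Qed.

Lemma sqrt_diff (m : nat) (f g : 'I_m -> R) :
  `|Num.sqrt (\sum_(j < m) f j ^+ 2) - Num.sqrt (\sum_(j < m) g j ^+ 2)| <=
  \sum_(j < m) `|f j - g j|.
Proof.
have h1 := sqrt_one_side f g; have h2 := sqrt_one_side g f.
have e : \sum_(j < m) `|g j - f j| = \sum_(j < m) `|f j - g j|.
  by apply: eq_bigr => j _; rewrite distrC.
rewrite e in h2; rewrite ler_norml; apply/andP; split; lra.
Qed.

End A.

Lemma in_Phi_bnd (R : realType) L W S B d (w : weights R) (b : biases R) :
  in_Phi L W S B d w b -> bnd L W d B w b.
Proof.
case=> [hw [hb _]]; split.
  by move=> l i j hl hi hj; exact: (hw (Ordinal hl) (Ordinal hi) (Ordinal hj)).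
by move=> l i hl hi; exact: (hb (Ordinal hl) (Ordinal hi)).
Qed.

Theorem mainTheorem17 (R : realType) (L W S d k : nat) (B delta : R)
  (wF wG : weights R) (bF bG : biases R) :
  (2 <= W)%N -> 0 < B -> 0 < delta -> (1 <= k)%N -> (k <= L)%N ->
  in_Phi L W S B d wF bF -> in_Phi L W S B d wG bG ->
  (forall l : 'I_k, forall i : 'I_(dout L W l), forall j : 'I_(din d W l),
      `|wF l i j - wG l i j| <= delta) ->
  (forall l : 'I_k, forall i : 'I_(dout L W l), `|bF l i - bG l i| <= delta) ->
  let bound := delta * W%:R ^+ ((3 ^ k.-1 - 1) %/ 2)%N
      * (Num.max B d%:R) ^+ ((5 * 3 ^ k.-1 - 1) %/ 2)%N
      * 2 ^+ ((3 ^ k - 1) %/ 2 + 1 - k)%N * 3 ^+ (2 * k - 2)%N in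
  (forall x : 'rV[R]_d, in_Omega x ->
     mx_inf_norm (jacobianF L W wF bF k x - jacobianF L W wG bG k x) <= bound) /\
  (k = L -> forall x : 'rV[R]_d, in_Omega x ->
     `|grad_norm W wF bF L x - grad_norm W wG bG L x| <= bound).
Proof.
move=> HW HB Hdel hk1 hkL hFP hGP wDo bDo bound.
have hF := in_Phi_bnd hFP; have hG := in_Phi_bnd hGP.
have wD : forall l i j, (l < k)%N -> (i < dout L W l)%N -> (j < din d W l)%N ->
    `|wF l i j - wG l i j| <= delta.
  by move=> l i j hl hi hj; exact: (wDo (Ordinal hl) (Ordinal hi) (Ordinal hj)).
have bD : forall l i, (l < k)%N -> (i < dout L W l)%N -> `|bF l i - bG l i| <= delta.
  by move=> l i hl hi; exact: (bDo (Ordinal hl) (Ordinal hi)).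
have b0 : 0 <= bound.
  rewrite /bound; apply: mulr_ge0; last exact: exprn_ge0.
  apply: mulr_ge0; last exact: exprn_ge0.
  apply: mulr_ge0; last by apply: exprn_ge0; rewrite le_max (ltW HB).
  apply: mulr_ge0; first exact: ltW.
  by apply: exprn_ge0; exact: ler0n.
have [n kE] : exists n, k = n.+1 by exists k.-1; rewrite prednK.
have row : forall x : 'rV[R]_d, in_Omega x -> forall i, (i < dout L W k.-1)%N ->
    \sum_(j < d) `|dpre W wF bF x (delta_mx 0 j) k.-1 i - dpre W wG bG x (delta_mx 0 j) k.-1 i|
      <= bound.
  move=> x Hx i hi.
  have [d0|d1] := posnP d.
    rewrite big1 // => j _; exfalso; by case: j => j; rewrite d0.
  have Hx' : forall j : 'I_d, `|x 0 j| <= 1.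
    by move=> j; have /andP[h0 h1] := Hx j; rewrite ger0_norm.
  have hn : (k.-1 < k)%N by rewrite kE.
  case: (inv HW HB Hdel d1 Hx' hF hG hkL wD bD hn hi) => _ _ _ _ H.
  apply: le_trans H _; rewrite /bound kE /= -bound_eq.
  by [].
split.
  move=> x Hx; rewrite /mx_inf_norm.
  apply: (big_ind (fun y => y <= bound)) => //.
    by move=> y z hy hz; rewrite ge_max hy hz.
  move=> i _.
  under eq_bigr do rewrite !mxE !D_Fk.
  exact: row x Hx i (ltn_ord i).
move=> kL x Hx; rewrite /grad_norm.
under eq_bigr do rewrite D_Fk.
under [X in `|_ - Num.sqrt X|]eq_bigr do rewrite D_Fk.
apply: le_trans (sqrt_diff _ _) _.
rewrite -kL; apply: row x Hx 0%N _.
by rewrite /dout prednK // kL eqxx.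
Qed.
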